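(* Let $a,b$ be integers with $0<b<a$, let $S=\langle a,a+1,\ldots,a+b\rangle$ with conductor $c$, let $m\ge 2c-1$ and let $t\in\{1,\ldots,a+b-1\}$. Then $$\sharp\mathrm D(m,m+1,\ldots,m+t)=\sharp\mathrm D(m)+\sum_{j=1}^{t}\left\lceil\frac{a+b-j}{b}\right\rceil.$$
   Context: The conductor $c$ of a numerical semigroup $S$ is the least element of $S$ with $c+n\in S$ for all $n\in\mathbb N$. For $x\in S$, $\mathrm D(x)=\{\alpha\in S\mid x-\alpha\in S\}$, and $\mathrm D(x_1,\ldots,x_t)=\mathrm D(x_1)\cup\cdots\cup\mathrm D(x_t)$. *)

(* Defs.v *)
From mathcomp Require Import all_boot.
From mathcomp Require Import boolp.
Set Implicit Arguments. Unset Strict Implicit. Unset Printing Implicit Defensive.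

Inductive gen_by (G : nat -> Prop) : nat -> Prop :=
| gen_by0 : gen_by G 0
| gen_byS x g : gen_by G x -> G g -> gen_by G (x + g).

Definition interval_sg (a b : nat) : nat -> Prop :=
  gen_by (fun g => a <= g <= a + b).

Definition is_conductor (S : nat -> Prop) (c : nat) : Prop :=
  [/\ S c, (forall n, S (c + n)) &
      (forall c', S c' -> (forall n, S (c' + n)) -> c <= c')].

Definition inD (S : nat -> Prop) (x alpha : nat) : Prop :=
  [/\ S alpha, alpha <= x & S (x - alpha)].

Definition inD_range (S : nat -> Prop) (m t alpha : nat) : Prop :=
  exists2 j, j <= t & inD S (m + j) alpha.

(* Cardinality of a predicate all of whose elements are <= N. *)
Definition card_upto (N : nat) (P : nat -> Prop) : nat :=
  count (fun n => `[< P n >]) (iota 0 N.+1).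

Definition ceil_div (p q : nat) : nat := (p + q.-1) %/ q.

(* Main.v *)
Require Import Defs.
From mathcomp Require Import all_boot.
From mathcomp Require Import boolp.
From mathcomp Require Import zify.

Lemma sg_char a b x : 0 < a ->
  interval_sg a b x <-> exists k, k * a <= x <= k * (a + b).
Proof.
move=> a0; split.
  elim=> [|y g _ [k /andP[h1 h2]] /andP[g1 g2]]; first by exists 0.
  exists k.+1; rewrite !mulSn; apply/andP; split; lia.
case=> k; elim: k x => [|k IH] x.
  rewrite !mul0n => /andP[_ h]; have -> : x = 0 by lia.
  exact: gen_by0.
rewrite !mulSn => /andP[h1 h2].
set g := minn (a + b) (x - k * a).
have -> : x = (x - g) + g by rewrite /g; lia.
apply: gen_byS; last by rewrite /g; apply/andP; split; lia.
apply: IH; rewrite /g; apply/andP; split.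
  lia.
rewrite mulnDr in h2 *; lia.
Qed.

Lemma gap_char a b t y : 0 < a ->
  (interval_sg a b (y + t.+1) /\ (forall j, j <= t -> ~ interval_sg a b (y + j)))
  <-> exists k, k * b + t.+1 < a /\ y = k.+1 * a - t.+1.
Proof.
move=> a0; split.
  case=> /(sg_char _ _ _ a0) [l /andP[l1 l2]] H.
  have Ht := H t (leqnn t).
  have El : y + t.+1 = l * a.
    apply/eqP; rewrite eqn_leq l1 andbT; apply/negP => hlt.
    apply: Ht; apply/(sg_char _ _ _ a0); exists l; apply/andP; split; lia.
  case: l El {l1 l2} => [|k] El; first lia.
  exists k; rewrite mulSn in El *.
  have Hx : k * (a + b) < y + t.
    rewrite ltnNge; apply/negP => hle; apply: Ht; apply/(sg_char _ _ _ a0).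
    exists k; apply/andP; split; lia.
  have Hy : k * (a + b) < y.
    rewrite ltnNge; apply/negP => hle.
    apply: (H (k * (a + b) - y)); first lia.
    apply/(sg_char _ _ _ a0); exists k; apply/andP; split; rewrite mulnDr in hle Hx *; lia.
  rewrite mulnDr in Hy; split; lia.
case=> k [hk ->]; split.
  apply/(sg_char _ _ _ a0); exists k.+1; rewrite !mulSn mulnDr; apply/andP; split; lia.
move=> j hj /(sg_char _ _ _ a0) [l /andP[l1 l2]].
case: (leqP l k) => hl.
  have := leq_mul hl (leqnn (a + b)); rewrite !mulSn mulnDr in l1 l2 *; lia.
have := leq_mul hl (leqnn a); rewrite !mulSn in l1 l2 *; lia.
Qed.

Lemma count_condb a b T : 0 < b -> 1 <= T <= a + b - 1 ->
  (count (fun k => k * b + T < a) (iota 0 a)).+1 = ceil_div (a + b - T) b.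
Proof.
move=> b0 hT; rewrite /ceil_div.
case: (ltnP T a) => hTa.
  set q := (a - 1 - T) %/ b.
  have hq : q < a by have := leq_div (a - 1 - T) b; rewrite -/q; lia.
  have -> : a = q.+1 + (a - q.+1) by lia.
  rewrite iotaD count_cat.
  have -> : count (fun k => k * b + T < q.+1 + (a - q.+1)) (iota 0 q.+1) = q.+1.
    rewrite -[in RHS](size_iota 0 q.+1) -count_predT; apply: eq_in_count => k.
    rewrite mem_iota /= => hk.
    have : k <= q by lia.
    rewrite /q leq_divRL //; lia.
  have -> : count (fun k => k * b + T < q.+1 + (a - q.+1)) (iota (0 + q.+1) (a - q.+1)) = 0.
    apply/eqP; rewrite -leqn0 leqNgt -has_count; apply/hasPn => k.
    rewrite mem_iota /= => /andP[hk _].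
    have : ~~ (k <= q) by lia.
    rewrite /q leq_divRL //; lia.
  have -> : q.+1 + (a - q.+1) + b - T + b.-1 = (a - 1 - T) + 2 * b by lia.
  rewrite divnDMl // -/q; lia.
have -> : count (fun k => k * b + T < a) (iota 0 a) = 0.
  apply/eqP; rewrite -leqn0 leqNgt -has_count; apply/hasPn => k _; lia.
have -> : a + b - T + b.-1 = (a + b - T - 1) + 1 * b by lia.
rewrite divnDMl // divn_small //; lia.
Qed.

Lemma count_rev_iota (p : pred nat) n :
  count (fun i => p (n - i)) (iota 0 n.+1) = count p (iota 0 n.+1).
Proof.
rewrite -(count_map (fun i => n - i) p); apply/(permP _ _).
apply: uniq_perm; last 2 first.
- exact: iota_uniq.
- move=> x; rewrite mem_iota; apply/mapP/idP.
    by case=> y; rewrite mem_iota => _ ->; lia.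
  move=> hx; exists (n - x); rewrite ?mem_iota; lia.
rewrite map_inj_in_uniq ?iota_uniq // => x y; rewrite !mem_iota; lia.
Qed.

Lemma count_gaps a b c m t : 0 < a -> 0 < b ->
  (forall n, interval_sg a b (c + n)) -> (2 * c).-1 <= m ->
  count (fun y => `[< interval_sg a b (y + t.+1) /\
                      (forall j, j <= t -> ~ interval_sg a b (y + j)) >]) (iota 0 m.+1)
  = count (fun k => k * b + t.+1 < a) (iota 0 a).
Proof.
move=> a0 b0 hc hm.
set f := fun k => k.+1 * a - t.+1.
rewrite -!size_filter.
rewrite -[in RHS](size_map f).
apply: perm_size; apply: uniq_perm.
- exact: (filter_uniq _ (iota_uniq _ _)).
- rewrite map_inj_in_uniq ?filter_uniq ?iota_uniq // => x y.
  rewrite !mem_filter !mem_iota /f => /andP[hx _] /andP[hy _].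
  rewrite !mulSn => E.
  have : x * a = y * a by lia.
  by move/eqP; rewrite eqn_pmul2r // => /eqP.
move=> y; rewrite mem_filter mem_iota /=; apply/andP/mapP.
  case=> /asboolP /(gap_char _ _ _ _ a0) [k [hk ->]] _; exists k => //.
  rewrite mem_filter mem_iota hk /=.
  have : k <= k * b by rewrite leq_pmulr.
  lia.
case=> k; rewrite mem_filter mem_iota => /andP[hk _] ->.
have G : interval_sg a b (f k + t.+1) /\
   (forall j, j <= t -> ~ interval_sg a b (f k + j)).
  by apply/(gap_char _ _ _ _ a0); exists k.
split; first exact/asboolP.
have hlt : f k < c.
  rewrite ltnNge; apply/negP => hle; apply: (G.2 0 (leq0n _)).
  by rewrite addn0 -(subnKC hle); apply: hc.
rewrite /=; lia.
Qed.

Lemma count_split (T : Type) (p p1 p2 : pred T) s :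
  (forall x, (p x : nat) = p1 x + p2 x) -> count p s = count p1 s + count p2 s.
Proof. move=> H; elim: s => //= x s ->; rewrite H; lia. Qed.

Lemma step a b c m t : 0 < a -> 0 < b ->
  (forall n, interval_sg a b (c + n)) -> (2 * c).-1 <= m ->
  card_upto (m + t.+1) (inD_range (interval_sg a b) m t.+1)
  = card_upto (m + t) (inD_range (interval_sg a b) m t)
    + (count (fun k => k * b + t.+1 < a) (iota 0 a)).+1.
Proof.
move=> a0 b0 hc hm.
set S := interval_sg a b.
have hS : forall x, c <= x -> S x by move=> x hx; rewrite -(subnKC hx); apply: hc.
have S0 : S 0 by apply: gen_by0.
rewrite /card_upto.
have -> : (m + t.+1).+1 = (m + t).+1 + 1 by lia.
rewrite iotaD count_cat.
have -> : count (fun n => `[< inD_range S m t.+1 n >]) (iota (0 + (m + t).+1) 1) = 1.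
  rewrite /= add0n addn0 asboolT //; exists t.+1 => //; split; rewrite ?addnS ?subnn //.
  apply: hS; lia.
set R := fun al => inD S (m + t.+1) al /\ ~ inD_range S m t al.
rewrite (@count_split _ _ (fun al => `[< inD_range S m t al >])
                     (fun al => `[< R al >])); last first.
  move=> x; case: (asboolP (inD_range S m t x)) => h.
    rewrite asboolT; last by case: h => j hj hD; exists j => //; apply: leqW.
    by rewrite asboolF //; case.
  case: (asboolP (R x)) => hR.
    rewrite asboolT //; exists t.+1 => //; exact: hR.1.
  rewrite asboolF // => -[j hj hD]; apply: hR; split => //.
  case: (leqP j t) => hjt; first by case: h; exists j.
  by have -> : t.+1 = j by lia.
rewrite addn1 -addnS; congr (_ + _).
have -> : (m + t).+1 = m.+1 + t by lia.
rewrite iotaD count_cat.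
have -> : count (fun al => `[< R al >]) (iota (0 + m.+1) t) = 0.
  apply/eqP; rewrite -leqn0 leqNgt -has_count; apply/hasPn => al.
  rewrite mem_iota add0n => /andP[h1 h2]; apply/negP => /asboolP [_ []].
  exists (al - m); first lia.
  rewrite (_ : m + (al - m) = al); last lia.
  split; rewrite ?subnn //; apply: hS; lia.
rewrite addn0 -(@count_gaps a b c m t a0 b0 hc hm) -[in RHS]count_rev_iota; congr _.+1.
apply: eq_in_count => al; rewrite mem_iota add0n => /andP[_ hal].
apply/asboolP/asboolP.
  case=> -[Sal hal' Sd] hn; split.
    by rewrite (_ : m - al + t.+1 = m + t.+1 - al) //; lia.
  move=> j hj Sj; apply: hn; exists j => //; split => //; first lia.
  by rewrite (_ : m + j - al = m - al + j) //; lia.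
case=> Sy hn.
have hy : m - al < c.
  rewrite ltnNge; apply/negP => hle; apply: (hn 0 (leq0n _)); rewrite addn0; exact: hS.
have Sal : S al by apply: hS; lia.
split.
  split => //; first lia.
  by rewrite (_ : m + t.+1 - al = m - al + t.+1) //; lia.
case=> j hj [_ _ Sj]; apply: (hn j hj).
by rewrite (_ : m - al + j = m + j - al) //; lia.
Qed.

Theorem corollary4p7 (a b c m t : nat) :
  0 < b -> b < a ->
  is_conductor (interval_sg a b) c ->
  (2 * c).-1 <= m ->
  1 <= t <= a + b - 1 ->
  card_upto (m + t) (inD_range (interval_sg a b) m t) =
  card_upto m (inD (interval_sg a b) m)
  + \sum_(1 <= j < t.+1) ceil_div (a + b - j) b.
Proof.
move=> b0 ba [_ hc _] hm /andP[_ ht].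
have a0 : 0 < a by lia.
elim: t ht => [|t IH] ht.
  rewrite big_geq // addn0 addn0 /card_upto; apply: eq_count => x.
  apply/asboolP/asboolP.
    by case=> j; rewrite leqn0 => /eqP ->; rewrite addn0.
  by move=> h; exists 0 => //; rewrite addn0.
rewrite (@step a b c) // big_nat_recr //= addnA -IH; last lia.
by rewrite count_condb //; lia.
Qed.
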